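(* In the setting below, let $i_1,\dots,i_m\in I$ and set $i_r':=(g_{i_1}g_{i_2}\cdots g_{i_{r-1}})(i_r)\in S$ for $1\le r\le m$. (1) If $i_r'=i_{r+1}'$ for some $r$, then there are $j_1,\dots,j_{m-2}\in I$ with $l_{j_1}\cdots l_{j_{m-2}}=l_{i_1}\cdots l_{i_m}$ in $L$ such that $j_k'=i_k'$ for $1\le k\le r-1$ and $j_k'=i_{k+2}'$ for $r\le k\le m-2$ (where $j_k'$ is defined from $j_1,\dots,j_k$ in the same way). (2) If $i_r'$ and $i_{r+1}'$ commute in $W$, then there are $j_1,\dots,j_m\in I$ with $l_{j_1}\cdots l_{j_m}=l_{i_1}\cdots l_{i_m}$ in $L$ such that $j_k'=i_k'$ for $k\ne r,r+1$, $j_r'=i_{r+1}'$ and $j_{r+1}'=i_r'$.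
   Context: Setting: $(W,S)$ is a right-angled Coxeter system (all off-diagonal Coxeter matrix entries in $\{2,\infty\}$), $G$ is a subgroup of $\mathrm{Aut}(W,S)$ (automorphisms of $W$ mapping $S$ bijectively to $S$), $I\subset S$, and $\{g_i\}_{i\in I}$ is a family of involutions in $G$ such that: (i) $g_i(s)\in S$ for all $i\in I$, $s\in S$; (ii) for all $i,j\in I$ with $ij=ji$, either [$g_i(j)\in I$, $g_j(i)=i$ and $g_{g_i(j)}=g_ig_jg_i$] or [$g_j(i)\in I$, $g_i(j)=j$ and $g_{g_j(i)}=g_jg_ig_j$]; (iii) $g_i(i)=i$ for all $i\in I$. $L$ is the group generated by symbols $l_i$, $i\in I$, subject to $l_i^2=1$ for all $i$, and $l_il_j=l_{g_i(j)}l_i$ whenever $ij=ji$, $g_j(i)=i$, $g_i(j)\in I$ and $g_{g_i(j)}=g_ig_jg_i$. *)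

(* Defs.v *)
From mathcomp Require Import all_boot.
Set Implicit Arguments. Unset Strict Implicit. Unset Printing Implicit Defensive.

(* Equality in a group given by a presentation with involutive generators
   (every generator x satisfies x^2 = 1 among the relations), realised as the
   congruence closure on words of the relation set R (each pair (u,v) in R is
   a defining relation u = v). *)
Inductive cong_closure (X : Type) (R : seq X -> seq X -> Prop)
  : seq X -> seq X -> Prop :=
| cc_rel u v : R u v -> cong_closure R u v
| cc_refl u : cong_closure R u u
| cc_sym u v : cong_closure R u v -> cong_closure R v u
| cc_trans u v w : cong_closure R u v -> cong_closure R v w -> cong_closure R u w
| cc_ctx a b u v : cong_closure R u v -> cong_closure R (a ++ u ++ b) (a ++ v ++ b).

(* Coxeter matrix m : S -> S -> option nat, with None standing for infinity.
   Right-angled: m s s = 1, symmetric, off-diagonal entries in {2, oo}. *)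
Definition right_angled_coxeter_matrix (S : Type) (m : S -> S -> option nat) :=
  [/\ forall s, m s s = Some 1,
      forall s t, m s t = m t s &
      forall s t, s <> t -> m s t = Some 2 \/ m s t = None].

Definition coxeter_rel (S : Type) (m : S -> S -> option nat) (u v : seq S) : Prop :=
  v = [::] /\ exists s t k, m s t = Some k /\ u = flatten (nseq k [:: s; t]).

Definition W_eq (S : Type) (m : S -> S -> option nat) := cong_closure (coxeter_rel m).

Definition W_commute (S : Type) (m : S -> S -> option nat) (s t : S) :=
  W_eq m [:: s; t] [:: t; s].

(* f : S -> S is (the restriction to S of) an automorphism of W mapping S
   bijectively onto S: f is a bijection of S whose induced map on words
   descends to a well-defined injective endomorphism of W (surjective since
   S generates W). *)
Definition is_autWS (S : Type) (m : S -> S -> option nat) (f : S -> S) :=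
  bijective f /\ forall u v, W_eq m u v <-> W_eq m (map f u) (map f v).

Definition all_in (S : Type) (I : S -> Prop) (l : seq S) : Prop :=
  foldr (fun x P => I x /\ P) True l.

(* Defining relations of L (generator l_i represented by the letter i \in I). *)
Definition L_rel (S : Type) (m : S -> S -> option nat) (I : S -> Prop)
    (g : S -> S -> S) (u v : seq S) : Prop :=
  (exists i, I i /\ u = [:: i; i] /\ v = [::]) \/
  (exists i j, I i /\ I j /\ W_commute m i j /\ g j i = i /\ I (g i j) /\
     (forall s, g (g i j) s = g i (g j (g i s))) /\
     u = [:: i; j] /\ v = [:: g i j; i]).

Definition L_eq (S : Type) (m : S -> S -> option nat) (I : S -> Prop)
    (g : S -> S -> S) := cong_closure (L_rel m I g).

(* primed g [:: i_1; ...; i_m] = [:: i_1'; ...; i_m'] with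
   i_r' = (g_{i_1} ... g_{i_{r-1}})(i_r). *)
Fixpoint primed (S : Type) (g : S -> S -> S) (l : seq S) : seq S :=
  if l is i :: l' then i :: map (g i) (primed g l') else [::].

(* Main.v *)
Require Import Defs.
From mathcomp Require Import all_boot.
Set Implicit Arguments.

Fixpoint compg (S : Type) (g : S -> S -> S) (l : seq S) : S -> S :=
  if l is i :: l' then fun s => g i (@compg S g l' s) else id.


Lemma primed_cat (S : Type) (g : S -> S -> S) (p q : seq S) :
  primed g (p ++ q) = primed g p ++ map (compg g p) (primed g q).
Proof.
elim: p => [|i p IH] /=; first by rewrite map_id.
by rewrite IH map_cat -map_comp.
Qed.

Lemma size_primed (S : Type) (g : S -> S -> S) (p : seq S) :
  size (primed g p) = size p.
Proof. by elim: p => [|i p IH] //=; rewrite size_map IH. Qed.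

Lemma all_in_cat (S : Type) (I : S -> Prop) (p q : seq S) :
  all_in I (p ++ q) <-> all_in I p /\ all_in I q.
Proof.
elim: p => [|i p IH] /=; first by tauto.
move: IH; tauto.
Qed.

Arguments all_in_cat {S I p q}.

Lemma compg_inj (S : Type) (I : S -> Prop) (g : S -> S -> S)
  (Hinv : forall i, I i -> forall s, g i (g i s) = s) p :
  all_in I p -> injective (compg g p).
Proof.
elim: p => [|i p IH] /=; first by move=> _ x y.
move=> [Hi Hp] x y /= E.
apply: (IH Hp); rewrite -(Hinv i Hi (compg g p x)) E. exact: Hinv.
Qed.

Lemma comm_g (S : Type) (m : S -> S -> option nat) (f : S -> S) :
  is_autWS m f -> forall a b, W_commute m (f a) (f b) <-> W_commute m a b.
Proof.
move=> [_ H] a b; rewrite /W_commute; split => C.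
  by apply/H.
by apply/(H [:: a; b] [:: b; a]).
Qed.

Lemma compg_comm (S : Type) (m : S -> S -> option nat) (I : S -> Prop)
  (g : S -> S -> S) (Haut : forall i, I i -> is_autWS m (g i)) p :
  all_in I p -> forall a b, W_commute m (compg g p a) (compg g p b) -> W_commute m a b.
Proof.
elim: p => [|i p IH] //= [Hi Hp] a b C.
apply: (IH Hp); apply/(comm_g (Haut i Hi)); exact: C.
Qed.

Lemma split_primed (S : Type) (g : S -> S -> S) (ws a c : seq S) :
  primed g ws = a ++ c ->
  exists pre rest, [/\ ws = pre ++ rest, primed g pre = a &
     map (compg g pre) (primed g rest) = c].
Proof.
move=> E.
exists (take (size a) ws), (drop (size a) ws).
have Hs : size a <= size ws.
  by rewrite -(size_primed g ws) E size_cat leq_addr.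
rewrite cat_take_drop.
have Hsz : size (primed g (take (size a) ws)) = size a.
  by rewrite size_primed size_take_min (minn_idPl Hs).
move: E; rewrite -{1}(cat_take_drop (size a) ws) primed_cat => E.
split => //.
  by rewrite -(take_size_cat (map (compg g (take (size a) ws)) (primed g (drop (size a) ws))) Hsz) E take_size_cat.
by rewrite -(drop_size_cat (map (compg g (take (size a) ws)) (primed g (drop (size a) ws))) Hsz) E drop_size_cat.
Qed.

Arguments compg_inj {S I g} Hinv {p} _ x1 x2 _.
Arguments compg_comm {S m I g} Haut {p} _ a b _.
Arguments comm_g {S m f} _ a b.

Theorem lemma2 (S : Type) (m : S -> S -> option nat) (I : S -> Prop)
  (g : S -> S -> S)
  (Hm : right_angled_coxeter_matrix m)
  (Haut : forall i, I i -> is_autWS m (g i))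
  (Hinv : forall i, I i -> forall s, g i (g i s) = s)
  (Hnontriv : forall i, I i -> exists s, g i s <> s)
  (Hii : forall i j, I i -> I j -> W_commute m i j ->
     (I (g i j) /\ g j i = i /\ (forall s, g (g i j) s = g i (g j (g i s)))) \/
     (I (g j i) /\ g i j = j /\ (forall s, g (g j i) s = g j (g i (g j s)))))
  (Hiii : forall i, I i -> g i i = i) :
  (forall (ws : seq S) (a b : seq S) (x : S),
     all_in I ws -> primed g ws = a ++ [:: x; x] ++ b ->
     exists js : seq S, [/\ all_in I js, L_eq m I g js ws & primed g js = a ++ b])
  /\
  (forall (ws : seq S) (a b : seq S) (x y : S),
     all_in I ws -> primed g ws = a ++ [:: x; y] ++ b -> W_commute m x y ->
     exists js : seq S, [/\ all_in I js, L_eq m I g js ws & primed g js = a ++ [:: y; x] ++ b]).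
Proof.
split.
- move=> ws a b x Hws E.
  have [pre [rest [Ews Hpre Hrest]]] := @split_primed S g _ _ _ E; subst ws; clear E.
  move: Hws => /(proj1 all_in_cat) [Hp Hr].
  case: rest Hr Hrest => [|i [|j post]] //= Hr.
  case: Hr => [Hi [Hj Hpost]] [E1 E2 Eb].
  have Eij : i = g i j.
    exact: (compg_inj Hinv Hp _ _ (etrans E1 (esym E2))).
  have Ej : j = i by rewrite -(Hinv i Hi j) -Eij Hiii.
  subst j.
  exists (pre ++ post); split.
  + by apply: (proj2 all_in_cat).
  + have -> : pre ++ i :: i :: post = pre ++ [:: i; i] ++ post by [].
    rewrite -{1}[pre ++ post]/(pre ++ [::] ++ post).
    apply: cc_ctx; apply: cc_sym; apply: cc_rel; left; by exists i.
  + rewrite primed_cat Hpre -Eb -!map_comp; congr (_ ++ _).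
    by apply: eq_map => s /=; rewrite Hinv.
- move=> ws a b x y Hws E Cxy.
  have [pre [rest [Ews Hpre Hrest]]] := @split_primed S g _ _ _ E; subst ws; clear E.
  move: Hws => /(proj1 all_in_cat) [Hp Hr].
  case: rest Hr Hrest => [|i [|j post]] //= Hr.
  case: Hr => [Hi [Hj Hpost]] [E1 E2 Eb].
  have Cij : W_commute m i j.
    have C1 : W_commute m i (g i j).
      apply: (compg_comm Haut Hp); by rewrite E1 E2.
    by move/(comm_g (Haut i Hi)): C1; rewrite Hiii // Hinv.
  rewrite -map_comp in Eb.
  case: (Hii i j Hi Hj Cij) => [[Hgij [Hgji Hform]] | [Hgji [Hgij Hform]]].
  + exists (pre ++ g i j :: i :: post); split.
    * apply: (proj2 all_in_cat); split => //=.
    * have -> : pre ++ i :: j :: post = pre ++ [:: i; j] ++ post by [].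
      have -> : pre ++ g i j :: i :: post = pre ++ [:: g i j; i] ++ post by [].
      apply: cc_ctx; apply: cc_sym; apply: cc_rel; right.
      exists i, j; do 6 (split => //).
    * rewrite primed_cat Hpre /= -map_comp Hform Hiii // Hgji Hiii // -E1 -E2 -Eb.
      congr (_ ++ _ :: _ :: _); rewrite -!map_comp.
      by apply: eq_map => s /=; rewrite Hform Hinv.
  + exists (pre ++ j :: g j i :: post); split.
    * apply: (proj2 all_in_cat); split => //=.
    * have -> : pre ++ i :: j :: post = pre ++ [:: i; j] ++ post by [].
      have -> : pre ++ j :: g j i :: post = pre ++ [:: j; g j i] ++ post by [].
      apply: cc_ctx; apply: cc_rel; right.
      exists j, (g j i).
      have Cj : W_commute m j (g j i).
        by apply/(comm_g (Haut j Hj)); rewrite Hinv // Hiii //; apply/cc_sym.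
      have H1 : g (g j i) j = j by rewrite Hform Hiii // Hgij Hiii.
      have H2 : g j (g j i) = i by rewrite Hinv.
      rewrite H2.
      split; first by []. split; first by []. split; first by [].
      split; first by []. split; first by [].
      split; first by move=> s; rewrite Hform !Hinv.
      by [].
    * rewrite Hgij in E2.
      rewrite primed_cat Hpre /= -map_comp Hinv // -E1 -E2 -Eb.
      congr (_ ++ _ :: _ :: _); rewrite -!map_comp.
      by apply: eq_map => s /=; rewrite Hform !Hinv.
Qed.
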